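(* Let $f:\mathbb{R}^n\to\mathbb{R}\cup\{+\infty\}$ be closed and convex, let $X\in\mathbb{R}^{n\times m}$ have rank $r$ with compact SVD $X=U_r\Sigma_r V_r^\top$, let $\gamma>0$ and $\lambda>0$. Define $$p_{\rm pen}(\lambda)=\min_{w\in\mathbb{R}^m}\ f(Xw)+\tfrac{\gamma}{2}\|w\|_2^2+\lambda\|w\|_0,$$ $$p^{**}_{\rm pen}(\lambda)=\min_{v\in\mathbb{R}^m,\ u\in[0,1]^m}\ f(XD(u)v)+\tfrac{\gamma}{2}v^\top D(u)v+\lambda\mathbf 1^\top u .$$ Let $(v^*,u^* )$ be an optimal solution of the latter problem with optimal value $t^*$, let $z^*=\Sigma_rV_r^\top D(u^* )v^*$, let $\ell_i$ be the $i$-th column of $\Sigma_rV_r^\top$, and let $c\sim\mathcal N(0,I_m)$. Consider the linear program in $u\in\mathbb{R}^m$: $$\min\ c^\top u\quad\text{s.t.}\quad f(U_rz^* )+\sum_{i=1}^m\Big(u_i\tfrac{\gamma}{2}(v_i^* )^2+\lambda u_i\Big)=t^*,\quad \sum_{i=1}^m u_i\ell_i v_i^*=z^*,\quad u\in[0,1]^m.$$ Then, with probability one, from an optimal basic feasible solution $\bar u$ of this linear program one can construct a primal feasible point (namely, with $S=\{i:\bar u_i\notin\{0,1\}\}$, $\tilde u_i=1,\tilde v_i=\bar u_iv_i^*$ for $i\in S$, $\tilde u_i=\bar u_i,\tilde v_i=v_i^*$ for $i\notin S$, and $w=D(\tilde u)\tilde v$) whose objective value $\mathrm{OPT}=f(Xw)+\tfrac{\gamma}{2}\|w\|_2^2+\lambda\mathbf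 1^\top\tilde u$ satisfies $$p^{**}_{\rm pen}(\lambda)\le p_{\rm pen}(\lambda)\le \mathrm{OPT}\le p^{**}_{\rm pen}(\lambda)+\lambda(r+1).$$
   Context: $\|w\|_0$ denotes the number of nonzero entries of $w$; $D(u)=\mathrm{diag}(u_1,\dots,u_m)$; $\mathbf 1$ is the all-ones vector. A function is closed if it is lower semicontinuous. Note $p_{\rm pen}(\lambda)=\min_{v\in\mathbb{R}^m,u\in\{0,1\}^m} f(XD(u)v)+\tfrac{\gamma}{2}v^\top D(u)v+\lambda\mathbf 1^\top u$. *)

(* Defs.v *)
From HB Require Import structures.
From mathcomp Require Import all_boot all_order all_algebra.
From mathcomp Require Import all_classical all_reals all_analysis.
From mathcomp Require Import normal_distribution.
Set Implicit Arguments. Unset Strict Implicit. Unset Printing Implicit Defensive.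
Import Order.TTheory GRing.Theory Num.Theory.
Import numFieldNormedType.Exports.
Local Open Scope classical_set_scope.
Local Open Scope ring_scope.

Section Defs.
Context {R : realType}.

Definition l0norm m (w : 'cV[R]_m) : nat := #|[set i | w i 0 != 0]|.
Definition sqnorm m (w : 'cV[R]_m) : R := \sum_i w i 0 ^+ 2.
Definition Dm m (u : 'cV[R]_m) : 'M[R]_m := diag_mx u^T.
Definition in01 m (u : 'cV[R]_m) : Prop := forall i, 0 <= u i 0 <= 1.

Definition convex_ext n (f : 'cV[R]_n -> \bar R) : Prop :=
  forall (x y : 'cV[R]_n) (t : R), 0 < t < 1 ->
    (f (t *: x + (1 - t) *: y)%R <= t%:E * f x + (1 - t)%:E * f y)%E.

(* p_pen(lambda) (written min in the paper; stated as an infimum) *)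
Definition ppen n m (f : 'cV[R]_n -> \bar R) (X : 'M[R]_(n, m)) (gamma lambda : R)
  : \bar R :=
  ereal_inf [set (f (X *m w) + (gamma / 2 * sqnorm w + lambda * (l0norm w)%:R)%:E)%E
            | w in [set: 'cV[R]_m]].

Definition pstar n m (f : 'cV[R]_n -> \bar R) (X : 'M[R]_(n, m)) (gamma lambda : R)
  : \bar R :=
  ereal_inf [set t | exists (v u : 'cV[R]_m), in01 u /\
     t = (f (X *m (Dm u *m v)) +
          (gamma / 2 * (v^T *m Dm u *m v) 0 0 + lambda * \sum_i u i 0)%:E)%E].

Section LP.
Variables (n m r : nat) (f : 'cV[R]_n -> \bar R) (X : 'M[R]_(n, m))
  (U : 'M[R]_(n, r)) (s : 'rV[R]_r) (V : 'M[R]_(m, r))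
  (gamma lambda : R) (vstar ustar : 'cV[R]_m) (tstar : \bar R).

Definition SVt : 'M[R]_(r, m) := diag_mx s *m V^T.
Definition zstar : 'cV[R]_r := SVt *m (Dm ustar *m vstar).
Definition ell (i : 'I_m) : 'cV[R]_r := col i SVt.

Definition lp_feasible (u : 'cV[R]_m) : Prop :=
  [/\ (f (U *m zstar) +
        (\sum_i (u i 0 * (gamma / 2 * vstar i 0 ^+ 2) + lambda * u i 0))%:E
        = tstar)%E,
      \sum_i (u i 0 * vstar i 0) *: ell i = zstar
    & in01 u].

(* coefficient matrix of the r+1 equality constraints (rows = their normals) *)
Definition lp_eq_mx : 'M[R]_(1 + r, m) :=
  col_mx (\row_i (gamma / 2 * vstar i 0 ^+ 2 + lambda)) (SVt *m Dm vstar).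

(* normals of the active bound constraints (zero rows for inactive ones) *)
Definition lp_active_mx (u : 'cV[R]_m) : 'M[R]_m :=
  diag_mx (\row_i ((u i 0 == 0) || (u i 0 == 1))%:R).

(* basic feasible solution: feasible, and the active constraints contain
   m linearly independent ones *)
Definition lp_bfs (u : 'cV[R]_m) : Prop :=
  lp_feasible u /\ \rank (col_mx lp_eq_mx (lp_active_mx u)) = m.

Definition lp_opt_bfs (c u : 'cV[R]_m) : Prop :=
  lp_bfs u /\ forall u', lp_feasible u' -> (c^T *m u) 0 0 <= (c^T *m u') 0 0.

Definition fracS (ub : 'cV[R]_m) (i : 'I_m) : bool :=
  (ub i 0 != 0) && (ub i 0 != 1).
Definition utilde (ub : 'cV[R]_m) : 'cV[R]_m :=
  \col_i (if fracS ub i then 1 else ub i 0).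
Definition vtilde (ub : 'cV[R]_m) : 'cV[R]_m :=
  \col_i (if fracS ub i then ub i 0 * vstar i 0 else vstar i 0).
Definition wround (ub : 'cV[R]_m) : 'cV[R]_m := Dm (utilde ub) *m vtilde ub.
Definition OPT (ub : 'cV[R]_m) : \bar R :=
  (f (X *m wround ub) +
   (gamma / 2 * sqnorm (wround ub) + lambda * \sum_i utilde ub i 0)%:E)%E.

End LP.
End Defs.

(* Main.v *)
Require Import Defs.
From HB Require Import structures.
From mathcomp Require Import all_boot all_order all_algebra.
From mathcomp Require Import all_classical all_reals all_analysis.
From mathcomp Require Import normal_distribution.
From mathcomp Require Import lra ring zify.
Import Order.TTheory GRing.Theory Num.Theory.
Import numFieldNormedType.Exports.
Local Open Scope classical_set_scope.
Local Open Scope ring_scope.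


Section Helpers.
Context {R : realType}.

Lemma DmE m (u v : 'cV[R]_m) i : (Dm u *m v) i 0 = u i 0 * v i 0.
Proof. by rewrite /Dm mul_diag_mx !mxE. Qed.

Lemma quadE m (u v : 'cV[R]_m) :
  (v^T *m Dm u *m v) 0 0 = \sum_i u i 0 * v i 0 ^+ 2.
Proof. rewrite -mulmxA mxE; apply: eq_bigr => i _; rewrite DmE !mxE; ring. Qed.

Lemma mul_colsum p q (A : 'M[R]_(p, q)) (w : 'cV[R]_q) :
  A *m w = \sum_i w i 0 *: col i A.
Proof.
apply/matrixP => a l; rewrite (ord1 l) !mxE summxE; apply: eq_bigr => i _.
by rewrite !mxE mulrC.
Qed.

Lemma sum_boolR (I : finType) (b : I -> bool) :
  \sum_i ((b i)%:R : R) = (#|[set i | b i]|)%:R.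
Proof.
rewrite -sumr_const [RHS]big_mkcond; apply: eq_bigr => i _.
have -> : (i \in in_set [set i0 | b i0]) = b i by apply/idP/idP => [/asboolP|h]; [|apply/asboolP].
by case: (b i).
Qed.

End Helpers.

Local Close Scope classical_set_scope.

Section LPgen.
Context {R : realType}.

Lemma ker_nonzero (p q : nat) (M : 'M[R]_(p, q)) :
  (\rank M < q)%N -> exists x : 'cV[R]_q, x != 0 /\ M *m x = 0.
Proof.
move=> hr.
have hk : kermx M^T != 0.
  apply/eqP => h0; move: (mxrank_ker M^T); rewrite h0 mxrank0 mxrank_tr => /eqP.
  by rewrite eq_sym subn_eq0 leqNgt hr.
have [k hk'] : exists k, row k (kermx M^T) != 0.
  apply/existsP; apply: contraR hk; rewrite negb_exists => /forallP hall.
  apply/eqP/row_matrixP => k; rewrite row0; exact/eqP/negbNE/hall.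
exists (row k (kermx M^T))^T; split; first by rewrite trmx_eq0.
by rewrite -[M]trmxK -trmx_mul trmxK -row_mul mulmx_ker row0 trmx0.
Qed.

Lemma full_ker0 (p q : nat) (M : 'M[R]_(p, q)) (x : 'cV[R]_q) :
  \rank M = q -> M *m x = 0 -> x = 0.
Proof.
move=> hr hx.
have hf : row_free M^T by rewrite /row_free mxrank_tr hr.
apply/eqP; rewrite -trmx_eq0 -(mulmx_free_eq0 _ hf) -trmx_mul hx trmx0 //.
Qed.

Lemma rank_sum_le (I : finType) (P : pred I) (p q : nat) (A : I -> 'M[R]_(p, q)) :
  (\rank (\sum_(i | P i) A i)%R <= \sum_(i | P i) \rank (A i))%N.
Proof.
elim/big_rec2: _ => [|i a B _ h]; first by rewrite mxrank0.
by apply: leq_trans (mxrank_add _ _) _; rewrite leq_add2l.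
Qed.

Lemma rank_diag_le (q : nat) (d : 'rV[R]_q) :
  (\rank (diag_mx d) <= #|[set i | d 0%R i != 0%R]|)%N.
Proof.
rewrite diag_mx_sum_delta (bigID (fun i => d 0 i != 0)) /=.
rewrite [X in _ + X]big1; last by move=> i /negPn/eqP ->; rewrite scale0r.
rewrite addr0; apply: leq_trans (rank_sum_le _ _ _ _ _) _.
rewrite cardsE -sum1_card; apply: leq_sum => i _.
by apply: leq_trans (mxrankS (scalemx_sub _ (submx_refl _))) _; rewrite mxrank_delta.
Qed.

Lemma rank_col_le (p1 p2 q : nat) (A : 'M[R]_(p1, q)) (B : 'M[R]_(p2, q)) :
  (\rank (col_mx A B) <= \rank A + \rank B)%N.
Proof. by rewrite -addsmxE mxrank_adds_leqif. Qed.

Lemma rank_col_sub (p0 p1 p2 q : nat) (A0 : 'M[R]_(p0, q)) (A : 'M[R]_(p1, q)) (B : 'M[R]_(p2, q)) :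
  \rank (col_mx A B) = q -> \rank (col_mx (col_mx A0 A) B) = q.
Proof.
move=> h; apply/eqP; rewrite eqn_leq rank_leq_col /= -{1}h; apply: mxrankS.
have sl : forall p3 p4 (X : 'M[R]_(p3, q)) (Y : 'M[R]_(p4, q)), (X <= col_mx X Y)%MS.
  by move=> p3 p4 X Y; rewrite -addsmxE addsmxSl.
have sr : forall p3 p4 (X : 'M[R]_(p3, q)) (Y : 'M[R]_(p4, q)), (Y <= col_mx X Y)%MS.
  by move=> p3 p4 X Y; rewrite -addsmxE addsmxSr.
rewrite col_mx_sub; apply/andP; split; last exact: sr.
exact: submx_trans (sr _ _ A0 A) (sl _ _ _ _).
Qed.

End LPgen.

Section Reduce.
Context {R : realType} (m k : nat) (K : 'M[R]_(k, m)) (b : 'cV[R]_k) (c : 'cV[R]_m).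

Definition feasK (u : 'cV[R]_m) := in01 u /\ K *m u = b.
Definition bfsK (u : 'cV[R]_m) := feasK u /\ \rank (col_mx K (lp_active_mx u)) = m.
Definition cval (u : 'cV[R]_m) := (c^T *m u) 0 0.

Lemma cvalD u d t : cval (u + t *: d) = cval u + t * cval d.
Proof. by rewrite /cval mulmxDr -scalemxAr !mxE. Qed.

Lemma activeE (u d : 'cV[R]_m) i :
  (lp_active_mx u *m d) i 0 = ((u i 0 == 0) || (u i 0 == 1))%:R * d i 0.
Proof. by rewrite /lp_active_mx mul_diag_mx !mxE. Qed.

Lemma reduce u : feasK u -> exists u', bfsK u' /\ cval u' <= cval u.
Proof.
pose inact (u : 'cV[R]_m) := #|[set i | fracS u i]|.
suff H : forall N u, (inact u < N)%N -> feasK u -> exists u', bfsK u' /\ cval u' <= cval u.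
  by move=> hu; apply: (H (inact u).+1).
elim=> // N IH {}u hN hf.
have [hr|hr] := eqVneq (\rank (col_mx K (lp_active_mx u))) m.
  by exists u; split.
have hlt : (\rank (col_mx K (lp_active_mx u)) < m)%N by rewrite ltn_neqAle hr rank_leq_col.
have [d0 [d0nz hd0]] := @ker_nonzero _ _ _ _ hlt.
have [d [dnz [Kd [Ad cd]]]] : exists d : 'cV[R]_m,
    [/\ d != 0, K *m d = 0, lp_active_mx u *m d = 0 & cval d <= 0].
  move: hd0; rewrite mul_col_mx => /eqP; rewrite -col_mx0 => /eqP /eq_col_mx [h1 h2].
  have [hc|hc] := leP (cval d0) 0.
    by exists d0; split.
  exists (- d0); split.
  - by rewrite oppr_eq0.
  - by rewrite mulmxN h1 oppr0.
  - by rewrite mulmxN h2 oppr0.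
  - by rewrite /cval mulmxN mxE oppr_le0 ltW.
have dact : forall i, ~~ fracS u i -> d i 0 = 0.
  move=> i; rewrite /fracS negb_and !negbK => ha.
  by move: (activeE u d i); rewrite Ad mxE ha mul1r => <-.
have [j0 hj0] : exists j0, d j0 0 != 0.
  apply/existsP; apply: contraR dnz; rewrite negb_exists => /forallP hall.
  by apply/eqP/matrixP => i l; rewrite (ord1 l) mxE; apply/eqP/negbNE/hall.
have [hu01 hKu] := hf.
pose ratio i := if 0 < d i 0 then (1 - u i 0) / d i 0 else u i 0 / - d i 0.
have ratio_ge0 : forall i, d i 0 != 0 -> 0 <= ratio i.
  move=> i hi; rewrite /ratio; have [/andP [h0 h1]] := hu01 i.
  case: ifP => hp; first by apply: divr_ge0; [rewrite subr_ge0|exact: ltW].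
  apply: divr_ge0 => //; rewrite oppr_ge0; move/negbT: hp; rewrite -leNgt //.
case: (@arg_minP _ _ _ j0 (fun i => d i 0 != 0) ratio hj0) => j hj hjmin.
pose t := ratio j.
have t0 : 0 <= t by exact: ratio_ge0.
pose u' := u + t *: d.
have u'E : forall i, u' i 0 = u i 0 + t * d i 0 by move=> i; rewrite !mxE.
have hf' : feasK u'.
  split; last by rewrite mulmxDr -scalemxAr Kd scaler0 addr0.
  move=> i; rewrite u'E.
  have [/andP [h0 h1]] := hu01 i.
  have [di0|din0] := eqVneq (d i 0) 0; first by rewrite di0 mulr0 addr0 h0 h1.
  have hti : t <= ratio i := hjmin i din0.
  move: hti; rewrite /ratio; case: ifP => hp hti.
    have := ler_wpM2r (ltW hp) hti; rewrite divfK // => h.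
    by apply/andP; split; [apply: addr_ge0 => //; apply: mulr_ge0 => //; exact: ltW | lra].
  have hn : d i 0 < 0 by rewrite lt_neqAle din0 leNgt hp.
  have hn' : 0 <= - d i 0 by rewrite oppr_ge0 ltW.
  have := ler_wpM2r hn' hti; rewrite divfK ?oppr_eq0 // => h.
  have : t * d i 0 <= 0 by rewrite mulr_ge0_le0 // ltW.
  move=> h2; apply/andP; split; nra.
have hsub : (inact u' < inact u)%N.
  rewrite /inact; apply: proper_card; apply/properP; split.
    apply/fintype.subsetP => i; rewrite !inE; apply: contraTT => hi.
    by rewrite /fracS u'E dact // mulr0 addr0; rewrite /fracS in hi.
  exists j; rewrite inE.
    by apply: contraR hj => /dact ->.
  rewrite /fracS u'E /t /ratio; case: ifP => hp.
    by rewrite divfK; [rewrite addrC subrK eqxx andbF | rewrite gt_eqF].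
  by rewrite invrN mulrN mulNr divfK // addrN eqxx.
have [u'' [hb hc]] := IH u' (leq_trans hsub hN) hf'.
exists u''; split => //; apply: le_trans hc _.
rewrite cvalD; have : t * cval d <= 0 by rewrite mulr_ge0_le0.
lra.
Qed.

Definition pat (u : 'cV[R]_m) : {ffun 'I_m -> bool * bool} :=
  [ffun i => (u i 0 == 0, u i 0 == 1)].

Lemma bfs_unique u u' : bfsK u -> feasK u' -> pat u = pat u' -> u = u'.
Proof.
move=> [[_ hKu] hr] [_ hKu'] hp.
apply/eqP; rewrite -subr_eq0; apply/eqP; apply: (@full_ker0 _ _ _ _ _ hr).
rewrite mul_col_mx mulmxBr hKu hKu' subrr.
suff -> : lp_active_mx u *m (u - u') = 0 by rewrite col_mx0.
apply/matrixP => i l; rewrite (ord1 l) activeE !mxE.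
have := congr1 (fun f : {ffun 'I_m -> bool * bool} => f i) hp; rewrite !ffunE => -[h0 h1].
have [ha|ha] := boolP ((u i 0 == 0) || (u i 0 == 1)); last by rewrite mul0r.
rewrite mul1r; apply/eqP; rewrite subr_eq0.
by case/orP: ha => /eqP e; [move: h0|move: h1]; rewrite e eqxx => /esym/eqP ->.
Qed.

Lemma exists_opt u0 : feasK u0 ->
  exists u, bfsK u /\ forall u', feasK u' -> cval u <= cval u'.
Proof.
move=> h0.
have [ub [hb _]] := reduce _ h0.
pose good p := `[< exists u, bfsK u /\ pat u = p >].
have [sel hsel] : {sel : {ffun 'I_m -> bool * bool} -> 'cV[R]_m & forall p, good p -> bfsK (sel p) /\ pat (sel p) = p}.
  apply: (@boolp.choice _ _ (fun p y => good p -> bfsK y /\ pat y = p)) => p.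
  case: (pselect (exists u, bfsK u /\ pat u = p)) => [[u hu]|hn]; first by exists u.
  by exists 0 => /asboolP.
have gb : good (pat ub) by apply/asboolP; exists ub.
case: (@arg_minP _ _ _ (pat ub) good (fun p => cval (sel p)) gb) => p hp hmin.
have [hsb _] := hsel p hp.
exists (sel p); split => // u' hu'.
have [u'' [hb'' hc'']] := reduce _ hu'.
apply: le_trans hc''.
have g'' : good (pat u'') by apply/asboolP; exists u''.
have := hmin _ g''.
have [hs1 hs2] := hsel _ g''.
by rewrite (bfs_unique _ _ hs1 hb''.1 hs2).
Qed.

End Reduce.

Lemma sum_boolF {R : realType} (I : finType) (b : I -> bool) :
  \sum_i ((b i)%:R : R) = (#|[set i | b i]|)%:R.
Proof.
rewrite -sumr_const [RHS]big_mkcond; apply: eq_bigr => i _; rewrite inE.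
by case: (b i).
Qed.

Local Open Scope classical_set_scope.

Theorem corollary3p1 (R : realType) (n m r : nat)
  (f : 'cV[R]_n -> \bar R) (X : 'M[R]_(n, m))
  (U : 'M[R]_(n, r)) (s : 'rV[R]_r) (V : 'M[R]_(m, r))
  (gamma lambda : R) (vstar ustar : 'cV[R]_m) (tstar : \bar R)
  (d : measure_display) (T : measurableType d) (P : probability T R)
  (c : 'I_m -> {RV P >-> R}) :
  (* f : R^n -> R \cup {+oo}, closed (lower semicontinuous) and convex *)
  (forall x, f x != -oo%E) ->
  lower_semicontinuous f ->
  convex_ext f ->
  (* rank r, compact SVD X = U_r Sigma_r V_r^T *)
  \rank X = r ->
  U^T *m U = 1%:M ->
  V^T *m V = 1%:M ->
  (forall i, 0 < s 0 i) ->
  (forall i j : 'I_r, (i <= j)%N -> s 0 j <= s 0 i) ->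
  X = U *m diag_mx s *m V^T ->
  0 < gamma -> 0 < lambda ->
  (* (v^*, u^* ) optimal for p^{**}_pen with optimal value t^* *)
  in01 ustar ->
  (f (X *m (Dm ustar *m vstar)) +
     (gamma / 2 * (vstar^T *m Dm ustar *m vstar) 0 0
      + lambda * \sum_i ustar i 0)%:E = tstar)%E ->
  pstar f X gamma lambda = tstar ->
  (* c ~ N(0, I_m): i.i.d. standard normal coordinates *)
  (forall i (B : set R), measurable B ->
     distribution P (c i) B = normal_prob 0 1 B) ->
  (forall B : 'I_m -> set R, (forall i, measurable (B i)) ->
     P (\bigcap_(i in [set: 'I_m]) (c i @^-1` B i)) =
     (\prod_(i < m) P (c i @^-1` B i))%E) ->
  {ae P, forall w : T,
    let cv : 'cV[R]_m := \col_i c i w in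
    (exists ub, lp_opt_bfs f U s V gamma lambda vstar ustar tstar cv ub) /\
    forall ub, lp_opt_bfs f U s V gamma lambda vstar ustar tstar cv ub ->
      [/\ (pstar f X gamma lambda <= ppen f X gamma lambda)%E,
          (ppen f X gamma lambda <= OPT f X gamma lambda vstar ub)%E
        & (OPT f X gamma lambda vstar ub <=
             pstar f X gamma lambda + (lambda * (r + 1)%:R)%:E)%E]}.
Proof.
move=> fnm _ _ _ _ _ _ _ HX hg hl hu01 Ht Hp _ _.
set z := zstar s V vstar ustar.
have HXw : forall w : 'cV[R]_m, X *m w = U *m (SVt s V *m w) by move=> w; rewrite HX /SVt !mulmxA.
pose K2 := SVt s V *m Dm vstar.
have K2E : forall u, K2 *m u = \sum_i (u i 0 * vstar i 0) *: ell s V i.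
  by move=> u; rewrite /K2 -mulmxA mul_colsum; apply: eq_bigr => i _; rewrite DmE mulrC.
have zE : z = K2 *m ustar.
  rewrite K2E /z /zstar mul_colsum; apply: eq_bigr => i _; by rewrite DmE.
pose row1 : 'rV[R]_m := \row_i (gamma / 2 * vstar i 0 ^+ 2 + lambda).
pose S1 (u : 'cV[R]_m) := \sum_i (u i 0 * (gamma / 2 * vstar i 0 ^+ 2) + lambda * u i 0).
have r1E : forall u, (row1 *m u) 0 0 = S1 u.
  by move=> u; rewrite mxE; apply: eq_bigr => i _; rewrite !mxE; ring.
have S1E : forall u, S1 u = gamma / 2 * \sum_i u i 0 * vstar i 0 ^+ 2 + lambda * \sum_i u i 0.
  move=> u; rewrite /S1 big_split /= -!mulr_sumr; congr (_ + _).
  by rewrite mulr_sumr; apply: eq_bigr => i _; ring.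
have Ht' : (f (U *m z) + (S1 ustar)%:E)%E = tstar.
  rewrite -Ht HXw /z /zstar S1E quadE //.
pose E := lp_eq_mx s V gamma lambda vstar.
have EE : E = col_mx row1 K2 by [].
have E2iff : forall u : 'cV[R]_m, (\sum_i (u i 0 * vstar i 0) *: ell s V i = z) <-> K2 *m u = K2 *m ustar.
  by move=> u; rewrite -K2E -zE.
have hopt : forall cv : 'cV[R]_m, exists ub, lp_opt_bfs f U s V gamma lambda vstar ustar tstar cv ub.
  move=> cv.
  case Hf: (f (U *m z)) => [y| |]; last by move: (fnm (U *m z)); rewrite Hf.
  - have feq : forall u : 'cV[R]_m, lp_feasible f U s V gamma lambda vstar ustar tstar u <-> @feasK _ _ _ E (E *m ustar) u.
      move=> u; rewrite /lp_feasible /feasK Hf -Ht' Hf EE !mul_col_mx; split.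
        case=> h1 h2 h3; split => //; congr col_mx; last exact/E2iff.
        apply/matrixP => a l; rewrite (ord1 a) (ord1 l) !r1E.
        by move: h1 => /= [] /addrI.
      case=> h3 /eq_col_mx [h1 h2]; split => //; last exact/E2iff.
      move: (congr1 (fun M : 'M[R]_1 => M 0 0) h1); rewrite /= !r1E => hh. by rewrite -hh.
    have hu0 : @feasK _ _ _ E (E *m ustar) ustar by [].
    have [u [[hfu hr] hmin]] := @exists_opt _ _ _ E (E *m ustar) cv ustar hu0.
    exists u; split; first by split => //; apply/feq.
    by move=> u' /feq; apply: hmin.
  - have feq : forall u : 'cV[R]_m, lp_feasible f U s V gamma lambda vstar ustar tstar u <-> @feasK _ _ _ K2 (K2 *m ustar) u.
      move=> u; rewrite /lp_feasible /feasK Hf -Ht' Hf; split.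
        by case=> h1 h2 h3; split => //; apply/E2iff.
      by case=> h3 h2; split => //; apply/E2iff.
    have hu0 : @feasK _ _ _ K2 (K2 *m ustar) ustar by [].
    have [u [[hfu hr] hmin]] := @exists_opt _ _ _ K2 (K2 *m ustar) cv ustar hu0.
    exists u; split; first by split; [apply/feq | exact: (@rank_col_sub _ _ _ _ _ row1 K2 _ hr)].
    by move=> u' /feq; apply: hmin.
apply: aeW => w; split; first exact: hopt.
move=> ub [[[E1 E2 hub] hrank] _].
have wE : wround vstar ub = Dm ub *m vstar.
  apply/matrixP => i l; rewrite (ord1 l) /wround !DmE !mxE.
  by case: (fracS ub i); rewrite ?mul1r.
have hXw : X *m wround vstar ub = U *m z.
  have DC : Dm ub *m vstar = Dm vstar *m ub.
    by apply/matrixP => i l; rewrite (ord1 l) !DmE mulrC.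
  by rewrite wE HXw DC (mulmxA (SVt s V)) -/K2 K2E E2.
have ut01 : forall i, utilde ub i 0 = 0 \/ utilde ub i 0 = 1.
  move=> i; rewrite mxE; case hS: (fracS ub i); first by right.
  by move: hS; rewrite /fracS => /negbT; rewrite negb_and !negbK => /orP [] /eqP; auto.
split.
- rewrite /ppen /pstar; apply: le_ereal_inf_tmp => x [v _ <-].
  apply: ereal_inf_lbound; exists v, (\col_i (v i 0 != 0)%:R); split.
    by move=> i; rewrite mxE; case: (v i 0 != 0); rewrite ?lexx ?ler01.
  have DE : Dm (\col_i (v i 0 != 0)%:R) *m v = v.
    apply/matrixP => i l; rewrite (ord1 l) DmE mxE.
    by case: eqP => [->|_]; rewrite ?mulr0 ?mul1r.
  rewrite DE quadE /sqnorm /l0norm -sum_boolR; congr (_ + (_ + _ * _)%:E)%E.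
    congr (_ * _); apply: eq_bigr => i _; rewrite mxE.
    by case: eqP => [->|_]; rewrite ?mul1r // expr2 mulr0 mul0r.
  by apply: eq_bigr => i _; rewrite mxE.
- apply: (@le_trans _ _ (f (X *m wround vstar ub) + (gamma / 2 * sqnorm (wround vstar ub) + lambda * (l0norm (wround vstar ub))%:R)%:E)%E).
    by apply: ereal_inf_lbound; exists (wround vstar ub).
  rewrite /OPT; apply: leeD2l; rewrite lee_fin lerD2l ler_pM2l // /l0norm -sum_boolR.
  apply: ler_sum => i _; rewrite /wround DmE.
  by case: (ut01 i) => ->; rewrite ?mul0r ?eqxx ?lexx //; case: (_ != 0); rewrite ?ler01 ?lexx.
- rewrite Hp /OPT hXw.
  case Hf: (f (U *m z)) => [y| |]; last by move: (fnm (U *m z)); rewrite Hf.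
    2: by rewrite -Ht' Hf !addye // leey.
  move: E1; rewrite Hf => E1; rewrite -E1 -!EFinD lee_fin.
  have hcard : (#|[set i | fracS ub i]%SET| <= r + 1)%N.
    have h1 := @rank_col_le _ _ _ _ (lp_eq_mx s V gamma lambda vstar) (lp_active_mx ub).
    rewrite hrank in h1.
    have h2 : (\rank (lp_eq_mx s V gamma lambda vstar) <= 1 + r)%N by apply: rank_leq_row.
    have h3 := @rank_diag_le _ _ (\row_i (((ub i 0 == 0) || (ub i 0 == 1))%:R : R)).
    have h4 : [set i | (\row_i (((ub i 0 == 0) || (ub i 0 == 1))%:R : R)) 0 i != 0]%SET
              = (~: [set i | fracS ub i])%SET.
      apply/setP => i; rewrite !inE mxE /fracS negb_and !negbK.
      by case: (_ || _); rewrite ?oner_eq0 ?eqxx.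
    rewrite h4 in h3.
    have h5 := cardsC [set i | fracS ub i]%SET; rewrite card_ord in h5.
    rewrite /lp_active_mx in h1. have h6 := leq_trans h1 (leq_add h2 h3). lia.
  have hsq : sqnorm (wround vstar ub) <= \sum_i ub i 0 * vstar i 0 ^+ 2.
    rewrite /sqnorm; apply: ler_sum => i _; rewrite wE DmE.
    have [/andP [h0 h1]] := hub i.
    have hv : 0 <= vstar i 0 ^+ 2 by rewrite sqr_ge0.
    rewrite exprMn; apply: ler_wpM2r => //; rewrite expr2; nra.
  have hut : \sum_i utilde ub i 0 <= \sum_i ub i 0 + (#|[set i | fracS ub i]%SET|)%:R.
    rewrite -sum_boolF -big_split /=; apply: ler_sum => i _; rewrite mxE.
    have [/andP [h0 h1]] := hub i.
    by case: (fracS ub i); rewrite ?addr0 ?lexx // lerDr.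
  have hc : ((#|[set i | fracS ub i]%SET|)%:R : R) <= (r + 1)%:R by rewrite ler_nat.
  have hS := S1E ub; rewrite /S1 in hS.
  have g2 : 0 <= gamma / 2 by apply: divr_ge0; [exact: ltW | ].
  have := ler_wpM2l g2 hsq.
  have := ler_wpM2l (ltW hl) hut.
  have := ler_wpM2l (ltW hl) hc.
  rewrite mulrDr; lra.
Qed.
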